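(* Consider the discrete-time linear Gaussian state-space model on time steps $k=1,2,\ldots,T$ (where $T=N+M$, with $N$ steps carrying an observation and $M$ steps with missing observation, in any order): $$\mathbf{x}_1 \sim \mathcal{N}(\mathbf{0},\mathbf{P}_\infty),\qquad \mathbf{x}_k = \mathbf{F}_{k-1}\mathbf{x}_{k-1} + \mathbf{q}_{k-1},\ \ \mathbf{q}_{k-1}\sim\mathcal{N}(\mathbf{0},\mathbf{Q}_{k-1})\ (k\ge 2),$$ $$y_k = \mathbf{H}\mathbf{x}_k + e_k,\quad e_k\sim\mathcal{N}(0,\sigma_k^2)\quad\text{for each observed step }k,$$ where $\mathbf{x}_k\in\mathbb{R}^{n_x}$, $\mathbf{H}\in\mathbb{R}^{1\times n_x}$, $\mathbf{P}_\infty,\mathbf{Q}_{k-1}$ are symmetric positive semidefinite, $\sigma_k^2>0$, and all noises are mutually independent and independent of $\mathbf{x}_1$. For each $k$ define an element $a_k=(\mathbf{A}_k,\mathbf{b}_k,\mathbf{C}_k,\boldsymbol{\eta}_k,\mathbf{J}_k)$ as follows. - If step $k$ has no observation: for $k>1$, $\mathbf{A}_k=\mathbf{F}_{k-1}$, $\mathbf{b}_k=\mathbf{0}$, $\mathbf{C}_k=\mathbf{Q}_{k-1}$; for $k=1$, $\mathbf{A}_1=\mathbf{0}$, $\mathbf{b}_1=\mathbf{0}$, $\mathbf{C}_1=\mathbf{P}_\infty$; and in both cases $\boldsymbol{\eta}_k=\mathbf{0}$, $\mathbf{J}_k=\mathbf{0}$. - If step $k>1$ has an observation: with $S_k=\mathbf{H}\mathbf{Q}_{k-1}\mathbf{H}^\top+\sigma_k^2$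 and $\mathbf{K}_k=\mathbf{Q}_{k-1}\mathbf{H}^\top S_k^{-1}$, set $\mathbf{A}_k=(\mathbf{I}-\mathbf{K}_k\mathbf{H})\mathbf{F}_{k-1}$, $\mathbf{b}_k=\mathbf{K}_k y_k$, $\mathbf{C}_k=(\mathbf{I}-\mathbf{K}_k\mathbf{H})\mathbf{Q}_{k-1}$, $\boldsymbol{\eta}_k=\mathbf{F}_{k-1}^\top\mathbf{H}^\top S_k^{-1}y_k$, $\mathbf{J}_k=\mathbf{F}_{k-1}^\top\mathbf{H}^\top S_k^{-1}\mathbf{H}\mathbf{F}_{k-1}$. - If step $k=1$ has an observation: with $S_1=\mathbf{H}\mathbf{P}_\infty\mathbf{H}^\top+\sigma_1^2$ and $\mathbf{K}_1=\mathbf{P}_\infty\mathbf{H}^\top S_1^{-1}$, set $\mathbf{A}_1=\mathbf{0}$, $\mathbf{b}_1=\mathbf{K}_1y_1$, $\mathbf{C}_1=\mathbf{P}_\infty-\mathbf{K}_1S_1\mathbf{K}_1^\top$, $\boldsymbol{\eta}_1=\mathbf{0}$, $\mathbf{J}_1=\mathbf{0}$. Define the binary operator $a_i\otimes a_j=(\mathbf{A}_{ij},\mathbf{b}_{ij},\mathbf{C}_{ij},\boldsymbol{\eta}_{ij},\mathbf{J}_{ij})$ by $$\mathbf{A}_{ij}=\mathbf{A}_j(\mathbf{I}+\mathbf{C}_i\mathbf{J}_j)^{-1}\mathbf{A}_i,\quad \mathbf{b}_{ij}=\mathbf{A}_j(\mathbf{I}+\mathbf{C}_i\mathbf{J}_j)^{-1}(\mathbf{b}_i+\mathbf{C}_i\boldsymbol{\eta}_j)+\mathbf{b}_j,$$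 $$\mathbf{C}_{ij}=\mathbf{A}_j(\mathbf{I}+\mathbf{C}_i\mathbf{J}_j)^{-1}\mathbf{C}_i\mathbf{A}_j^\top+\mathbf{C}_j,\quad \boldsymbol{\eta}_{ij}=\mathbf{A}_i^\top(\mathbf{I}+\mathbf{J}_j\mathbf{C}_i)^{-1}(\boldsymbol{\eta}_j-\mathbf{J}_j\mathbf{b}_i)+\boldsymbol{\eta}_i,$$ $$\mathbf{J}_{ij}=\mathbf{A}_i^\top(\mathbf{I}+\mathbf{J}_j\mathbf{C}_i)^{-1}\mathbf{J}_j\mathbf{A}_i+\mathbf{J}_i,$$ and the prefix elements $a_1^*=a_1$, $a_k^*=a_{k-1}^*\otimes a_k$ for $k\ge2$, writing $a_k^*=(\mathbf{A}^*_k,\mathbf{b}^*_k,\mathbf{C}^*_k,\boldsymbol{\eta}^*_k,\mathbf{J}^*_k)$. Then for all $k=1,\ldots,N+M$, the Kalman filter mean $\overline{\mathbf{x}}_k=\mathbb{E}[\mathbf{x}_k\mid \text{observations } y_j \text{ at observed steps } j\le k]$ and covariance $\mathbf{P}_k=\mathrm{Cov}[\mathbf{x}_k\mid \text{same observations}]$ satisfy $\overline{\mathbf{x}}_k=\mathbf{b}^*_k$ and $\mathbf{P}_k=\mathbf{C}^*_k$.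
   Context: This arises from a Gaussian process regression problem in state-space form: a continuous-time linear SDE $d\mathbf{x}(t)/dt=\mathbf{G}\mathbf{x}(t)+\mathbf{L}\mathbf{w}(t)$ with $f(t)=\mathbf{H}\mathbf{x}(t)$ started from its stationary covariance $\mathbf{P}_\infty$, discretized at the sorted union of training times (observed) and prediction times (treated as missing observations), giving transition matrices $\mathbf{F}_{k-1}$ and process noise covariances $\mathbf{Q}_{k-1}$. The sequential Kalman filter for this model performs, at each step, a prediction through the transition (for $k\ge2$) and a measurement update only at steps with an observation (no update at missing steps). The matrices $\mathbf{I}+\mathbf{C}_i\mathbf{J}_j$ arising in the operator are assumed invertible (they are, since the $\mathbf{C}$ and $\mathbf{J}$ components are positive semidefinite). The operator $\otimes$ is associative, so the prefix elements can be computed by a parallel scan. *)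

(* Defs.v *)
From HB Require Import structures.
From mathcomp Require Import all_boot all_order all_algebra.
Set Implicit Arguments. Unset Strict Implicit. Unset Printing Implicit Defensive.
Import Order.TTheory GRing.Theory Num.Theory.
Local Open Scope ring_scope.

Section KF.
Variables (R : realFieldType) (n : nat).

Definition psd (M : 'M[R]_n) : Prop :=
  M^T = M /\ forall v : 'cV[R]_n, 0 <= (v^T *m M *m v) 0 0.

(* The model data (time steps are numbered k = 1, 2, ...):
   F k, Q k  = F_k, Q_k  (so step k >= 2 uses F (k-1), Q (k-1)),
   obs k     = whether step k carries an observation,
   y k, s2 k = observation y_k and its noise variance sigma_k^2. *)
Variables (Pinf : 'M[R]_n) (F Q : nat -> 'M[R]_n) (H : 'rV[R]_n)
          (obs : nat -> bool) (y s2 : nat -> R).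

Definition quadH (M : 'M[R]_n) : R := (H *m M *m H^T) 0 0.

Definition kf_update (k : nat) (mP : 'cV[R]_n * 'M[R]_n) : 'cV[R]_n * 'M[R]_n :=
  let: (m, P) := mP in
  if obs k then
    let S := quadH P + s2 k in
    let K := S^-1 *: (P *m H^T) in
    (m + (y k - (H *m m) 0 0) *: K, P - S *: (K *m K^T))
  else (m, P).

Definition kf_predict (k : nat) (mP : 'cV[R]_n * 'M[R]_n) : 'cV[R]_n * 'M[R]_n :=
  let: (m, P) := mP in
  (F k.-1 *m m, F k.-1 *m P *m (F k.-1)^T + Q k.-1).

(* kf i = (filter mean, filter covariance) at step i.+1 *)
Fixpoint kf (i : nat) : 'cV[R]_n * 'M[R]_n :=
  match i with
  | 0 => kf_update 1 (0, Pinf)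
  | i'.+1 => kf_update i'.+2 (kf_predict i'.+2 (kf i'))
  end.

Definition kf_mean (k : nat) : 'cV[R]_n := (kf k.-1).1.
Definition kf_cov (k : nat) : 'M[R]_n := (kf k.-1).2.

Record elem := Elem {
  eA : 'M[R]_n; eb : 'cV[R]_n; eC : 'M[R]_n; eeta : 'cV[R]_n; eJ : 'M[R]_n }.

Definition elem_at (k : nat) : elem :=
  if k == 1%N then
    if obs 1 then
      let S := quadH Pinf + s2 1 in
      let K := S^-1 *: (Pinf *m H^T) in
      Elem 0 (y 1 *: K) (Pinf - S *: (K *m K^T)) 0 0
    else Elem 0 0 Pinf 0 0
  else
    if obs k then
      let S := quadH (Q k.-1) + s2 k in
      let K := S^-1 *: (Q k.-1 *m H^T) in
      let IKH := 1%:M - K *m H in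
      Elem (IKH *m F k.-1) (y k *: K) (IKH *m Q k.-1)
           ((S^-1 * y k) *: ((F k.-1)^T *m H^T))
           (S^-1 *: ((F k.-1)^T *m H^T *m H *m F k.-1))
    else Elem (F k.-1) 0 (Q k.-1) 0 0.

Definition elem_op (ai aj : elem) : elem :=
  let: Elem Ai bi Ci etai Ji := ai in
  let: Elem Aj bj Cj etaj Jj := aj in
  let M1 := invmx (1%:M + Ci *m Jj) in
  let M2 := invmx (1%:M + Jj *m Ci) in
  Elem (Aj *m M1 *m Ai)
       (Aj *m M1 *m (bi + Ci *m etaj) + bj)
       (Aj *m M1 *m Ci *m Aj^T + Cj)
       (Ai^T *m M2 *m (etaj - Jj *m bi) + etai)
       (Ai^T *m M2 *m Jj *m Ai + Ji).

(* prefix i = a*_{i.+1} *)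
Fixpoint prefix (i : nat) : elem :=
  match i with
  | 0 => elem_at 1
  | i'.+1 => elem_op (prefix i') (elem_at i'.+2)
  end.

Definition astar (k : nat) : elem := prefix k.-1.

End KF.

(* Main.v *)
Require Import Defs.
From HB Require Import structures.
From mathcomp Require Import all_boot all_order all_algebra.
From mathcomp Require Import ring lra.
Import Order.TTheory GRing.Theory Num.Theory.
Local Open Scope ring_scope.

Section Alg.
Variables (R : realFieldType) (n : nat).

Lemma collapse (x : 'cV[R]_n) (z : 'rV[R]_n) (t : 'cV[R]_n) :
  x *m z *m t = ((z *m t) 0 0) *: x.
Proof. by rewrite -mulmxA {1}[z *m t]mx11_scalar mul_mx_scalar. Qed.

Lemma collapse2 (p : nat) (A : 'M[R]_(p,n)) (x : 'cV[R]_n) (z : 'rV[R]_n) (t : 'cV[R]_n) :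
  A *m x *m z *m t = ((z *m t) 0 0) *: (A *m x).
Proof. by rewrite -mulmxA {1}[z *m t]mx11_scalar mul_mx_scalar. Qed.

Lemma invmx_eq (A X : 'M[R]_n) : A *m X = 1%:M -> invmx A = X.
Proof.
move=> h; have [uA _] := mulmx1_unit h.
by rewrite -[invmx A]mulmx1 -h mulmxA mulVmx // mul1mx.
Qed.

Lemma inv_rank1 (P : 'M[R]_n) (u : 'cV[R]_n) (S S' : R) :
  S != 0 -> S' = S + (u^T *m P *m u) 0 0 -> S' != 0 ->
  invmx (1%:M + P *m (S^-1 *: (u *m u^T))) =
  1%:M - S'^-1 *: (P *m u *m u^T).
Proof.
set a := (u^T *m P *m u) 0 0 => hS -> hS'.
apply: invmx_eq.
have hM : P *m u *m u^T *m (P *m u *m u^T) = a *: (P *m u *m u^T).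
  by rewrite !mulmxA -(mulmxA (P *m u) u^T P) collapse2 -scalemxAl.
rewrite mulmxDl mul1mx mulmxBr mulmx1 -scalemxAr mulmxA -scalemxAl -scalemxAr hM !scalerA.
rewrite -addrA -[RHS]addr0; congr (_ + _).
rewrite -scalerBl -scaleNr -scalerDl.
have -> : - (S + a)^-1 + (S^-1 - S^-1 * (S + a)^-1 * a) = 0 by field; apply/andP.
by rewrite scale0r.
Qed.

Lemma entryD p q (A B : 'M[R]_(p,q)) i j : (A + B) i j = A i j + B i j.
Proof. by rewrite mxE. Qed.
Lemma entryB p q (A B : 'M[R]_(p,q)) i j : (A - B) i j = A i j - B i j.
Proof. by rewrite !mxE. Qed.
Lemma entryZ p q k (A : 'M[R]_(p,q)) i j : (k *: A) i j = k * A i j.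
Proof. by rewrite mxE. Qed.

Lemma key_b (F P Q : 'M[R]_n) (H : 'rV[R]_n) (m : 'cV[R]_n) (y s : R) :
  P^T = P -> Q^T = Q ->
  let S := (H *m Q *m H^T) 0 0 + s in
  let S' := (H *m (F *m P *m F^T + Q) *m H^T) 0 0 + s in
  S != 0 -> S' != 0 ->
  let K := S^-1 *: (Q *m H^T) in
  (1%:M - K *m H) *m F *m invmx (1%:M + P *m (S^-1 *: (F^T *m H^T *m H *m F)))
     *m (m + P *m ((S^-1 * y) *: (F^T *m H^T))) + y *: K
  = F *m m + (y - (H *m (F *m m)) 0 0) *: (S'^-1 *: ((F *m P *m F^T + Q) *m H^T)).
Proof.
move=> sP sQ S S' hS hS' K.
set u := F^T *m H^T.
have Hu : H *m F = u^T by rewrite /u trmx_mul !trmxK.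
have S'E : S' = S + (u^T *m P *m u) 0 0.
  rewrite /S' /S mulmxDr mulmxDl entryD -Hu /u !mulmxA.
  ring.
have -> : u *m H *m F = u *m u^T by rewrite -mulmxA Hu.
rewrite (@inv_rank1 P u S S' hS S'E hS').
set p := P *m u.
set v := F *m p.
set r := Q *m H^T.
have Hc : (H *m (F *m m)) = u^T *m m by rewrite mulmxA Hu.
rewrite Hc.
have hPu : P *m ((S^-1 * y) *: u) = (S^-1 * y) *: p by rewrite -scalemxAr.
rewrite hPu.
set k := S^-1 * y.
have e1 : (1%:M - S'^-1 *: (p *m u^T)) *m (m + k *: p)
   = m + (k - S'^-1 * ((u^T *m m) 0 0 + k * (u^T *m p) 0 0)) *: p.
  rewrite mulmxBl mul1mx -scalemxAl collapse mulmxDr -scalemxAr entryD entryZ.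
  by rewrite scalerA scalerBl addrA.
rewrite -mulmxA e1.
set be := k - _.
rewrite -mulmxA mulmxDr -scalemxAr -/v.
rewrite mulmxBl mul1mx collapse mulmxDr -scalemxAr entryD entryZ Hc.
rewrite [H *m v]mulmxA Hu.
have -> : (F *m P *m F^T + Q) *m H^T = v + r by rewrite mulmxDl /v /p /u /r !mulmxA.
rewrite /K !scalerA scalerDr -!addrA; congr (_ + _).
rewrite /be /k /p mulmxA.
move: hS'; rewrite S'E => hS'.
rewrite -scaleNr -scalerDl; congr (_ *: _ + _ *: _).
  by field; apply/andP; split=> //.
by field; apply/andP; split=> //.
Qed.

Lemma trD p q (A B : 'M[R]_(p,q)) : (A + B)^T = A^T + B^T.
Proof. by apply/matrixP=> i j; rewrite !mxE. Qed.
Lemma trB p q (A B : 'M[R]_(p,q)) : (A - B)^T = A^T - B^T.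
Proof. by apply/matrixP=> i j; rewrite !mxE. Qed.
Lemma trZ p q c (A : 'M[R]_(p,q)) : (c *: A)^T = c *: A^T.
Proof. by apply/matrixP=> i j; rewrite !mxE. Qed.

Lemma sAl p q r c (A : 'M[R]_(p,q)) (B : 'M[R]_(q,r)) : (c *: A) *m B = c *: (A *m B).
Proof. by rewrite scalemxAl. Qed.
Lemma sAr p q r c (A : 'M[R]_(p,q)) (B : 'M[R]_(q,r)) : A *m (c *: B) = c *: (A *m B).
Proof. by rewrite scalemxAr. Qed.

Lemma collapseL (z : 'rV[R]_n) (t : 'cV[R]_n) (w : 'rV[R]_n) :
  z *m t *m w = ((z *m t) 0 0) *: w.
Proof. by rewrite {1}[z *m t]mx11_scalar mul_scalar_mx. Qed.

Lemma key_C (F P Q : 'M[R]_n) (H : 'rV[R]_n) (s : R) :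
  P^T = P -> Q^T = Q ->
  let S := (H *m Q *m H^T) 0 0 + s in
  let S' := (H *m (F *m P *m F^T + Q) *m H^T) 0 0 + s in
  S != 0 -> S' != 0 ->
  let K := S^-1 *: (Q *m H^T) in
  (1%:M - K *m H) *m F *m invmx (1%:M + P *m (S^-1 *: (F^T *m H^T *m H *m F)))
     *m P *m ((1%:M - K *m H) *m F)^T + (1%:M - K *m H) *m Q
  = F *m P *m F^T + Q - S' *: (S'^-1 *: ((F *m P *m F^T + Q) *m H^T)
        *m (S'^-1 *: ((F *m P *m F^T + Q) *m H^T))^T).
Proof.
move=> sP sQ S S' hS hS' K.
set u := F^T *m H^T.
have Hu : H *m F = u^T by rewrite /u trmx_mul !trmxK.
have S'E : S' = S + (u^T *m P *m u) 0 0.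
  rewrite /S' /S mulmxDr mulmxDl entryD -Hu /u !mulmxA.
  ring.
have -> : u *m H *m F = u *m u^T by rewrite -mulmxA Hu.
rewrite (@inv_rank1 P u S S' hS S'E hS').
set p := P *m u.
set v := F *m p.
set r := Q *m H^T.
set Pi := F *m P *m F^T.
have hvT : u^T *m P *m F^T = v^T by rewrite /v /p !trmx_mul sP.
have hPiH : Pi *m H^T = v by rewrite /Pi /v /p /u !mulmxA.
have hHPi : H *m Pi = v^T by rewrite /Pi !mulmxA Hu hvT.
have hrT : H *m Q = r^T by rewrite /r trmx_mul trmxK sQ.
have hFX : F *m (1%:M - S'^-1 *: (p *m u^T)) *m P *m F^T = Pi - S'^-1 *: (v *m v^T).
  rewrite mulmxBr mulmx1 -scalemxAr mulmxA -/v mulmxBl -scalemxAl mulmxBl -scalemxAl.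
  by rewrite -/Pi -(mulmxA v) -(mulmxA v) hvT.
have hHv : H *m v = u^T *m P *m u by rewrite /v /p !mulmxA Hu.
have hvH : (v^T *m H^T) 0 0 = (H *m v) 0 0 by rewrite -trmx_mul mxE.
have hrH : (r^T *m H^T) 0 0 = (H *m r) 0 0 by rewrite -trmx_mul mxE.
have hHr : H *m r = H *m Q *m H^T by rewrite mulmxA.
have C1 : forall p (X : 'M[R]_(p, 1)), X *m H *m Pi = X *m v^T by move=> ? X; rewrite -mulmxA hHPi.
have C2 : forall p (X : 'M[R]_(p, n)), X *m Pi *m H^T = X *m v by move=> ? X; rewrite -mulmxA hPiH.
have C4 : forall p (X : 'M[R]_(p, 1)), X *m H *m Q = X *m r^T by move=> ? X; rewrite -mulmxA hrT.
have C5 : forall p (X : 'M[R]_(p, n)), X *m Q *m H^T = X *m r by move=> ? X; rewrite -mulmxA.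
rewrite [((_ - K *m H) *m F)^T]trmx_mul.
have -> : (1%:M - K *m H) *m F *m (1%:M - S'^-1 *: (p *m u^T)) *m P *m (F^T *m (1%:M - K *m H)^T)
   = (1%:M - K *m H) *m (F *m (1%:M - S'^-1 *: (p *m u^T)) *m P *m F^T) *m (1%:M - K *m H)^T.
  by rewrite !mulmxA.
rewrite hFX /K -/r.
have -> : (Pi + Q) *m H^T = v + r by rewrite mulmxDl hPiH.
move: S'E; rewrite -hHv => S'E.
clearbody Pi v r p u S S'.
rewrite !(trB, trD, trZ, trmx_mul, trmx1, trmxK).
rewrite !(mulmxBl, mulmxBr, mulmxDl, mulmxDr, mul1mx, mulmx1, mulNmx, mulmxN, sAl, sAr, scalerA, scalerN, mulmxA, C1, C2, C4, C5, collapse, hvH, hrH, hPiH).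
move: hS'; rewrite S'E => hS'.
apply/matrixP=> i j; rewrite !mxE.
rewrite !mxE in hS'.
by field; rewrite hS hS'.
Qed.

Lemma Sprime_nz (F P Q : 'M[R]_n) (H : 'rV[R]_n) (s : R) :
  let S := (H *m Q *m H^T) 0 0 + s in
  let S' := (H *m (F *m P *m F^T + Q) *m H^T) 0 0 + s in
  S != 0 ->
  (1%:M + P *m (S^-1 *: (F^T *m H^T *m H *m F))) \in unitmx -> S' != 0.
Proof.
move=> S S' hS hU.
set u := F^T *m H^T.
have Hu : H *m F = u^T by rewrite /u trmx_mul !trmxK.
have S'E : S' = S + (u^T *m P *m u) 0 0.
  rewrite /S' /S mulmxDr mulmxDl entryD -Hu /u !mulmxA.
  ring.
apply/negP => /eqP h0.
rewrite -/u -mulmxA Hu in hU.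
clearbody u.
have hx : (1%:M + P *m (S^-1 *: (u *m u^T))) *m (P *m u) = 0.
  rewrite mulmxDl mul1mx sAr sAl !mulmxA -(mulmxA (P *m u) u^T P) collapse2.
  rewrite scalerA -{1}[P *m u]scale1r -scalerDl.
  have -> : 1 + S^-1 * (u^T *m P *m u) 0 0 = 0.
    by move: h0; rewrite S'E => h0; apply: (@mulfI _ S) => //; rewrite mulr0 mulrDr mulr1 mulrA divff // mul1r.
  by rewrite scale0r.
have : P *m u = 0 by rewrite -[P *m u]mul1mx -(mulVmx hU) -mulmxA hx mulmx0.
move=> hPu; move: h0; rewrite S'E -mulmxA hPu mulmx0 mxE addr0 => h0.
by move: hS; rewrite h0 eqxx.
Qed.
End Alg.
Section Aux.
Variables (R : realFieldType) (n : nat)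
  (Pinf : 'M[R]_n) (F Q : nat -> 'M[R]_n) (H : 'rV[R]_n)
  (obs : nat -> bool) (y s2 : nat -> R).

Lemma prefix_shape i : eA (Defs.prefix Pinf F Q H obs y s2 i) = 0 /\
  eeta (Defs.prefix Pinf F Q H obs y s2 i) = 0 /\ eJ (Defs.prefix Pinf F Q H obs y s2 i) = 0.
Proof.
elim: i => [|i [hA [he hJ]]] /=.
  by rewrite /elem_at /=; case: (obs 1).
move: hA he hJ; case: (Defs.prefix _ _ _ _ _ _ _ i) => Ai bi Ci ei Ji /= -> -> ->.
case: (elem_at _ _ _ _ _ _ _ _) => Aj bj Cj ej Jj /=.
by rewrite !mulmx0 trmx0 !mul0mx !addr0.
Qed.

Lemma prefix_step i : exists b C,
  Defs.prefix Pinf F Q H obs y s2 i = Elem 0 b C 0 0.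
Proof.
have := prefix_shape i; case: (Defs.prefix _ _ _ _ _ _ _ i) => A b C e J /= [-> [-> ->]].
by exists b, C.
Qed.

End Aux.

Theorem proposition1 (R : realFieldType) (nx : nat)
  (Pinf : 'M[R]_nx) (F Q : nat -> 'M[R]_nx) (H : 'rV[R]_nx)
  (obs : nat -> bool) (y s2 : nat -> R) (T : nat) :
  psd Pinf ->
  (forall k, (2 <= k <= T)%N -> psd (Q k.-1)) ->
  (forall k, (1 <= k <= T)%N -> obs k -> 0 < s2 k) ->
  (* invertibility of I + C_i J_j in the prefix computation (assumed) *)
  (forall k, (2 <= k <= T)%N ->
     (1%:M + eC (astar Pinf F Q H obs y s2 k.-1)
             *m eJ (elem_at Pinf F Q H obs y s2 k)) \in unitmx) ->
  forall k, (1 <= k <= T)%N ->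
    kf_mean Pinf F Q H obs y s2 k = eb (astar Pinf F Q H obs y s2 k) /\
    kf_cov Pinf F Q H obs y s2 k = eC (astar Pinf F Q H obs y s2 k).
Proof.
move=> hPinf hQ hs hU.
have qpos : forall M : 'M[R]_nx, psd M -> 0 <= (H *m M *m H^T) 0 0.
  by move=> M [_ hM]; have := hM H^T; rewrite trmxK.
have main : forall i, (i.+1 <= T)%N ->
  kf Pinf F Q H obs y s2 i = (eb (Defs.prefix Pinf F Q H obs y s2 i), eC (Defs.prefix Pinf F Q H obs y s2 i))
  /\ (kf Pinf F Q H obs y s2 i).2^T = (kf Pinf F Q H obs y s2 i).2.
  elim=> [|i IH] hi.
    rewrite /= /kf_update /elem_at /=.
    case: hPinf => sP _.
    case: (obs 1) => /=; last by split.
    rewrite mulmx0 mxE subr0 add0r; split=> //.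
    by rewrite !(trB, trZ, trmx_mul, trmxK) sP.
  have [b [C hpre]] := @prefix_step _ _ Pinf F Q H obs y s2 i.
  have [IHe IHs] := IH (ltnW hi).
  rewrite hpre /= in IHe.
  have -> : kf Pinf F Q H obs y s2 i.+1 =
     kf_update H obs y s2 i.+2 (kf_predict F Q i.+2 (kf Pinf F Q H obs y s2 i)) by [].
  have -> : Defs.prefix Pinf F Q H obs y s2 i.+1 =
     elem_op (Defs.prefix Pinf F Q H obs y s2 i) (elem_at Pinf F Q H obs y s2 i.+2) by [].
  rewrite IHe hpre in IHs *.
  have hUi := hU i.+2 hi.
  rewrite /astar /= hpre /= in hUi.
  have [sQ _] := hQ i.+2 hi.
  rewrite /= in sQ IHs.
  rewrite /kf_predict /kf_update /elem_at /elem_op /=.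
  move: hUi; rewrite /elem_at /=.
  case hobs: (obs i.+2) => hUi /=.
    rewrite /quadH.
    have hS : (H *m Q i.+1 *m H^T) 0 0 + s2 i.+2 != 0.
      apply/negP => /eqP h.
      have := qpos _ (hQ i.+2 hi); have := hs i.+2 hi hobs => /=; lra.
    have hS' := @Sprime_nz _ _ (F i.+1) C (Q i.+1) H (s2 i.+2) hS hUi.
    split.
      congr pair; symmetry.
        exact: key_b.
      exact: key_C.
    by rewrite !(trB, trD, trZ, trmx_mul, trmxK) IHs sQ !mulmxA.
  rewrite !mulmx0 !addr0 invmx1 !mulmx1; split=> //.
  by rewrite !(trD, trmx_mul, trmxK) IHs sQ mulmxA.
move=> k /andP [hk1 hkT].
have [e _] := main k.-1 ltac:(by rewrite prednK).
by rewrite /kf_mean /kf_cov /astar e.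
Qed.
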